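(* Let $n\ge3$ and $R$ an associative ring with identity. Then $E_n(R)$ is normally generated by a subgroup isomorphic to $A_{n+1}$, namely the image of $A_{n+1}<\mathrm{SAut}(F_n)$ under $\mathrm{SAut}(F_n)\to\mathrm{SL}_n(\mathbb{Z})=E_n(\mathbb{Z})\to E_n(R)$, the last map induced by the ring map $\mathbb{Z}\to R$.
   Context: $E_n(R)$ is the subgroup of $\mathrm{GL}_n(R)$ generated by the elementary matrices $e_{ij}(r)$ ($1\le i\ne j\le n$, $r\in R$) with $1$'s on the diagonal, $r$ at $(i,j)$, zeros elsewhere. The subgroup $A_{n+1}<\mathrm{SAut}(F_n)$: with $F_n=\langle a_1,\dots,a_n\rangle$, $\sigma_{ij}$ ($1\le i\ne j\le n$) swaps $a_i,a_j$, and $\sigma_{i,n+1}$ sends $a_i\mapsto a_i^{-1}$, $a_j\mapsto a_ja_i^{-1}$ ($j\neq i$); these generate $S_{n+1}$ and $A_{n+1}$ is its even part. The map $\mathrm{SAut}(F_n)\to\mathrm{SL}_n(\mathbb{Z})$ is induced by the action on $F_n^{ab}=\mathbb{Z}^n$, and it is injective on this $A_{n+1}$. *)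

(* Defs.v *)
From HB Require Import structures.
From mathcomp Require Import all_boot all_order all_algebra all_fingroup.
Set Implicit Arguments. Unset Strict Implicit. Unset Printing Implicit Defensive.
Import GRing.Theory.
Local Open Scope ring_scope.

Definition elem_mx (R : nzRingType) (n : nat) (i j : 'I_n) (r : R) : 'M[R]_n :=
  1%:M + r *: delta_mx i j.

Inductive gen_group (R : nzRingType) (n : nat) (S : 'M[R]_n -> Prop) : 'M[R]_n -> Prop :=
  | gen_one : gen_group S 1%:M
  | gen_base x : S x -> gen_group S x
  | gen_mul x y : gen_group S x -> gen_group S y -> gen_group S (x *m y)
  | gen_inv x y : gen_group S x -> x *m y = 1%:M -> y *m x = 1%:M -> gen_group S y.

Definition En (R : nzRingType) (n : nat) : 'M[R]_n -> Prop :=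
  gen_group (fun M => exists i j : 'I_n, exists r : R, i != j /\ M = elem_mx i j r).

Inductive normal_closure (R : nzRingType) (n : nat) (G S : 'M[R]_n -> Prop)
  : 'M[R]_n -> Prop :=
  | nc_one : normal_closure G S 1%:M
  | nc_base x : S x -> normal_closure G S x
  | nc_mul x y : normal_closure G S x -> normal_closure G S y ->
                 normal_closure G S (x *m y)
  | nc_inv x y : normal_closure G S x -> x *m y = 1%:M -> y *m x = 1%:M ->
                 normal_closure G S y
  | nc_conj x g h : normal_closure G S x -> G g -> g *m h = 1%:M -> h *m g = 1%:M ->
                 normal_closure G S (g *m x *m h).

(* Image in SL_n(Z) (acting on F_n^ab = Z^n, columns = images of basis vectors)
   of the automorphism sigma_{ij} of F_n, indices in 'I_n.+1 where the last
   index ord_max plays the role of n+1: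
   - for i, j <= n: sigma_ij swaps a_i, a_j  -> permutation matrix;
   - sigma_{m,n+1}: a_m -> a_m^{-1}, a_l -> a_l a_m^{-1}  -> row m all -1,
     other rows as the identity. *)
Definition sigma_int (n : nat) (i j : 'I_n.+1) : 'M[int]_n :=
  \matrix_(k < n, l < n)
    (if ((val i < n) && (val j < n))%N then
      ((val k == (if val l == val i then val j
                  else if val l == val j then val i else val l)) : int)
    else
      let m := if (val i < n)%N then val i else val j in
      if val k == m then -1 else ((k == l) : int)).

Definition sigma_mx (R : nzRingType) (n : nat) (i j : 'I_n.+1) : 'M[R]_n :=
  map_mx (fun z : int => z%:~R) (sigma_int i j).

(* Main.v *)
Require Import Defs.
From HB Require Import structures.
From mathcomp Require Import all_boot all_order all_algebra all_fingroup.
From mathcomp Require Import zify.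
Import GRing.Theory.
Local Open Scope ring_scope.

Definition wd (n : nat) (k : 'I_n) : 'I_n.+1 := widen_ord (leqnSn n) k.
Arguments wd {n}.

Definition fm (R : nzRingType) {n : nat} (p : {perm 'I_n.+1}) : 'M[R]_n :=
  \matrix_(k, l) (((p (wd k) == wd l) %:R : R) - (p (wd k) == ord_max)%:R).

Lemma wd_eq n (a b : 'I_n) : (wd a == wd b) = (a == b).
Proof. by []. Qed.

Lemma lift_wd n (c : 'I_n) : lift ord_max c = wd c.
Proof. by apply: val_inj; rewrite /= /bump leqNgt ltn_ord. Qed.

Lemma wd_max n (c : 'I_n) : (wd c == ord_max) = false.
Proof. by apply/negbTE; rewrite -lift_wd eq_sym neq_lift. Qed.

Lemma max_wd n (c : 'I_n) : (ord_max == wd c) = false.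
Proof. by rewrite eq_sym wd_max. Qed.

Lemma sum_perm_eq (R : nzRingType) n (q : {perm 'I_n.+1}) (y : 'I_n.+1) :
  \sum_(m < n) ((q (wd m) == y)%:R : R) = 1 - (q ord_max == y)%:R.
Proof.
have H : \sum_(x < n.+1) ((q x == y)%:R : R) = 1.
  rewrite (bigD1 (q^-1 y)%g) //=.
  rewrite (permKV q) eqxx big1 ?addr0 // => x /negbTE xn.
  have -> : (q x == y) = (x == (q^-1 y)%g) by apply/eqP/eqP => [<-|->]; rewrite ?permK ?(permKV q).
  by rewrite xn.
rewrite big_ord_recr /= in H.
apply: (@addIr _ ((q ord_max == y)%:R)); rewrite subrK; exact: H.
Qed.

Lemma aux (V : zmodType) (x a b : V) : a - b = - ((x - a) - (x - b)).
Proof. by rewrite opprB [x - b]addrC addrKA opprK addrC. Qed.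

Lemma fmM (R : nzRingType) n (p q : {perm 'I_n.+1}) :
  fm R (p * q)%g = fm R p *m fm R q.
Proof.
apply/matrixP => k l; rewrite !mxE permM.
under eq_bigr do rewrite !mxE.
case: (unliftP ord_max (p (wd k))) => [c|] ->.
- rewrite (bigD1 c) //= lift_wd wd_max eqxx subr0 mul1r big1 ?addr0 // => m /negbTE.
  by rewrite wd_eq eq_sym => ->; rewrite subr0 mul0r.
- under eq_bigr do rewrite eq_sym wd_max eqxx sub0r mulN1r.
  rewrite sumrN sumrB !sum_perm_eq.
  exact: aux.
Qed.

Lemma fm1 (R : nzRingType) n : fm R (1%g : {perm 'I_n.+1}) = 1%:M.
Proof.
apply/matrixP => k l; rewrite !mxE perm1 wd_max subr0 wd_eq.
by case: eqP.
Qed.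

Lemma other n (c : 'I_n) : (1 < n)%N -> exists l : 'I_n, l != c.
Proof.
move=> hn.
have h0 : (0 < n)%N by apply: ltn_trans hn.
case: (eqVneq c (Ordinal h0)) => [->|ne]; last by exists (Ordinal h0); rewrite eq_sym.
by exists (Ordinal hn).
Qed.

Arguments other {n}.

Lemma fm_inj (R : nzRingType) n (hn : (1 < n)%N) (p q : {perm 'I_n.+1}) :
  fm R p = fm R q -> p = q.
Proof.
move=> H.
have key : forall k : 'I_n, p (wd k) = q (wd k).
  move=> k; have E := fun l => congr1 (fun M : 'M[R]_n => M k l) H.
  simpl in E.
  case: (unliftP ord_max (p (wd k))) => [c|] Hp;
    case: (unliftP ord_max (q (wd k))) => [d|] Hq.
  - rewrite Hp Hq !lift_wd; have := E c; rewrite !mxE Hp Hq !lift_wd !wd_max eqxx !subr0 wd_eq.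
    by case: eqP => [->//|_] /eqP; rewrite oner_eq0.
  - have [l lc] := other c hn.
    have lc' : (c == l) = false by rewrite eq_sym (negbTE lc).
    have := E l; rewrite !mxE Hp Hq lift_wd wd_max max_wd wd_eq lc' eqxx /= ?mulr0n ?mulr1n subr0 sub0r.
    by move=> /eqP; rewrite eq_sym oppr_eq0 oner_eq0.
  - have [l lc] := other d hn.
    have lc' : (d == l) = false by rewrite eq_sym (negbTE lc).
    have := E l; rewrite !mxE Hp Hq lift_wd wd_max max_wd wd_eq lc' eqxx /= ?mulr0n ?mulr1n subr0 sub0r.
    by move=> /eqP; rewrite oppr_eq0 oner_eq0.
  - by rewrite Hp Hq.
apply/permP => x; case: (unliftP ord_max x) => [k|] ->; first by rewrite lift_wd key.
case: (unliftP ord_max ((q^-1)%g (p ord_max))) => [k Hk|Hk].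
- have E : p ord_max = p (wd k) by rewrite key -lift_wd -Hk (permKV q).
  move/perm_inj: E => E.
  move: (@wd_max n k); rewrite -E eqxx => hh; discriminate hh.
- by rewrite -[in RHS]Hk (permKV q).
Qed.
Lemma tp_small n (i j k l : 'I_n) : i != j ->
  (tperm (wd i) (wd j) (wd k) == wd l) =
  (val k == (if val l == val i then val j else if val l == val j then val i else val l)).
Proof.
move=> ij; rewrite permE /= !fun_if !if_arg !wd_eq !val_eqE.
by repeat (case: eqP => [?|?]; subst; rewrite ?eqxx //= in ij * ).
Qed.

Lemma tp_small_max n (i j k : 'I_n) :
  (tperm (wd i) (wd j) (wd k) == ord_max) = false.
Proof. by rewrite permE /= !wd_eq; case: ifP => _; [|case: ifP => _]; rewrite wd_max. Qed.

Lemma tp_max n (i k l : 'I_n) :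
  (tperm (wd i) ord_max (wd k) == wd l) = (k != i) && (k == l).
Proof.
rewrite permE /= wd_eq wd_max.
by case: (eqVneq k i) => [_|ne] /=; rewrite ?max_wd ?wd_eq.
Qed.

Lemma tp_max_max n (i k : 'I_n) :
  (tperm (wd i) ord_max (wd k) == ord_max) = (k == i).
Proof.
rewrite permE /= wd_eq wd_max.
by case: (eqVneq k i) => [_|ne] /=; rewrite ?eqxx ?wd_max.
Qed.

Lemma fm_tperm (R : nzRingType) n (i j : 'I_n.+1) : i != j -> fm R (tperm i j) = sigma_mx R i j.
Proof.
move=> ij; apply/matrixP => k l; rewrite !mxE.
case: (unliftP ord_max i) => [i'|] -> in ij *; case: (unliftP ord_max j) => [j'|] -> in ij *;
  rewrite ?lift_wd ?eqxx // in ij *.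
- rewrite wd_eq in ij.
  rewrite tp_small // tp_small_max subr0 /= (ltn_ord i') (ltn_ord j') /=.
  by case: (_ == _).
- rewrite tp_max tp_max_max /= (ltn_ord i') ltnn /=.
  rewrite -[(val k == val i')]/(k == i').
  by case: (k == i') => /=; rewrite ?sub0r ?mulrN1z ?subr0 //; case: (k == l).
- rewrite tpermC tp_max tp_max_max /= (ltn_ord j') ltnn /=.
  rewrite -[(val k == val j')]/(k == j').
  by case: (k == j') => /=; rewrite ?sub0r ?mulrN1z ?subr0 //; case: (k == l).
Qed.

Lemma L1 (R : nzRingType) n (A : 'M[R]_n) (i j : 'I_n) (r : R) a b :
  (A *m (r *: delta_mx i j)) a b = A a i * (r * (b == j)%:R).
Proof.
rewrite !mxE (bigD1 i) //= big1 ?addr0; first by rewrite !mxE eqxx.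
by move=> l /negbTE li; rewrite !mxE li /= mulr0 mulr0.
Qed.

Lemma L2 (R : nzRingType) n (A : 'M[R]_n) (i j : 'I_n) (r : R) a b :
  ((r *: delta_mx i j) *m A) a b = r * ((a == i)%:R * A j b).
Proof.
rewrite !mxE (bigD1 j) //= big1 ?addr0; first by rewrite !mxE eqxx andbT mulrA.
by move=> l /negbTE lj; rewrite !mxE lj andbF /= mulr0 mul0r.
Qed.

Lemma dd0 (R : nzRingType) n (i j k l : 'I_n) (r s : R) : j != k ->
  (r *: delta_mx i j) *m (s *: delta_mx k l) = 0.
Proof.
move=> jk; apply/matrixP => a b; rewrite L1 !mxE [k == j]eq_sym (negbTE jk) andbF.
by rewrite mulr0 mul0r.
Qed.

Lemma elem_inv (R : nzRingType) n (i j : 'I_n) (r : R) : i != j ->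
  elem_mx i j r *m elem_mx i j (- r) = 1%:M.
Proof.
move=> ij; rewrite /elem_mx mulmxDl !mulmxDr !mul1mx !mulmx1 dd0 1?eq_sym //.
by rewrite addr0 scaleNr addrNK.
Qed.

Lemma elem_inv' (R : nzRingType) n (i j : 'I_n) (r : R) : i != j ->
  elem_mx i j (- r) *m elem_mx i j r = 1%:M.
Proof. by move=> ij; rewrite -{2}(opprK r) elem_inv. Qed.
Lemma conj_alg1 (R : nzRingType) n (s D D' : 'M[R]_n) :
  s *m s = 1%:M -> s *m D = - D -> D *m s = D' -> D' *m D = 0 -> D' *m s = D ->
  (1%:M + D) *m s *m (1%:M - D) *m s = 1%:M + D + D'.
Proof.
move=> ss sD Ds D'D D's.
rewrite mulmxDl mul1mx Ds mulmxDl !mulmxBr !mulmx1 sD D'D subr0 opprK.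
by rewrite !mulmxDl ss Ds D's addrAC.
Qed.

Lemma conj_alg2 (R : nzRingType) n (E D D' : 'M[R]_n) :
  E *m D = 0 -> E *m D' = 0 -> D *m E = D' -> D' *m E = 0 -> E *m E = 0 ->
  (1%:M + E) *m (1%:M + D + D') *m (1%:M - E) = 1%:M + D.
Proof.
move=> ED ED' DE D'E EE.
rewrite mulmxDl mul1mx !mulmxDr mulmx1 ED ED' !addr0.
by rewrite mulmx1 mulmxN !mulmxDl mul1mx DE D'E EE !addr0 opprD addrA !addrK.
Qed.

Lemma other2 n (i j : 'I_n) : (2 < n)%N -> exists k : 'I_n, k != i /\ k != j.
Proof.
move=> hn.
have [v [vn vi vj]] : exists v, [/\ (v < n)%N, v != val i & v != val j].
  case: (eqVneq (val i) 0%N) => i0; case: (eqVneq (val j) 0%N) => j0.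
  - by exists 1%N; split; rewrite ?i0 ?j0 //; lia.
  - case: (eqVneq (val j) 1%N) => j1.
    + by exists 2%N; split; rewrite ?i0 ?j1 //; lia.
    + by exists 1%N; split; rewrite ?i0 1?eq_sym //; lia.
  - case: (eqVneq (val i) 1%N) => i1.
    + by exists 2%N; split; rewrite ?i1 ?j0 //; lia.
    + by exists 1%N; split; rewrite ?j0 1?eq_sym //; lia.
  - by exists 0%N; split; rewrite 1?eq_sym // 1?eq_sym //; lia.
by exists (Ordinal vn).
Qed.

Lemma tperm_eqE (T : finType) (x y z w : T) : (tperm x y z == w) = (z == tperm x y w).
Proof. by rewrite -{1}(tpermK x y w) (inj_eq (@perm_inj _ _)). Qed.

Section Sig.
Variables (R : nzRingType) (n : nat) (i j k : 'I_n).
Hypotheses (ij : i != j) (ki : k != i) (kj : k != j).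

Let t1 : {perm 'I_n.+1} := tperm (wd i) ord_max.
Let t2 : {perm 'I_n.+1} := tperm (wd j) (wd k).
Definition pp := (t1 * t2)%g.

Lemma pp_even : ~~ odd_perm pp.
Proof.
by rewrite /pp odd_permM !odd_tperm wd_max wd_eq eq_sym (negbTE kj).
Qed.

Lemma t12 : (t1 * t2 = t2 * t1)%g.
Proof.
rewrite [RHS]conjgC /t2 tpermJ /t1 !tpermD //.
all: by rewrite ?wd_eq ?max_wd // eq_sym.
Qed.

Lemma pp2 : (pp * pp = 1)%g.
Proof.
have gen : forall a b : {perm 'I_n.+1}, (a * b = b * a -> a * a = 1 -> b * b = 1 ->
   (a * b) * (a * b) = 1)%g.
  move=> a b ab aa bb.
  by rewrite mulgA -(mulgA a b a) -ab mulgA aa mul1g bb.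
exact: (gen _ _ t12 (tperm2 _ _) (tperm2 _ _)).
Qed.
Definition sg := fm R pp.

Lemma sg_col a : sg a i = - (a == i)%:R.
Proof.
rewrite !mxE /pp permM !tperm_eqE.
have e1 : tperm (wd j) (wd k) (wd i) = wd i.
  by rewrite tpermD // wd_eq // eq_sym.
have e2 : tperm (wd j) (wd k) ord_max = ord_max by rewrite tpermD // wd_max.
by rewrite e1 e2 tpermL tpermR wd_max wd_eq sub0r.

Qed.

Lemma sg_rowj b : sg j b = (b == k)%:R.
Proof.
rewrite !mxE /pp permM (@tpermD _ (wd i) ord_max (wd j)) ?wd_eq ?max_wd //.
by rewrite tpermL wd_eq wd_max subr0 eq_sym.
Qed.

Lemma sg_rowk b : sg k b = (b == j)%:R.
Proof.
rewrite !mxE /pp permM (@tpermD _ (wd i) ord_max (wd k)) ?wd_eq ?max_wd 1?eq_sym //.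
by rewrite tpermR wd_eq wd_max subr0 eq_sym.
Qed.

Lemma sg2 : sg *m sg = 1%:M.
Proof. by rewrite /sg -fmM pp2 fm1. Qed.
End Sig.

Arguments elem_inv {R n i j} r.
Arguments elem_inv' {R n i j} r.

Ltac bsimp0 := rewrite /= ?mulr0n ?mulr1n ?oppr0 ?mulN1r ?mul0r ?mulr0 ?mulr1 ?mul1r ?oppr0.

Lemma En_elem (R : nzRingType) n (a b : 'I_n) (c : R) : a != b -> En (elem_mx a b c).
Proof. by move=> ab; apply: gen_base; exists a, b, c. Qed.
Arguments En_elem {R n a b} c.

Lemma nc_elem (R : nzRingType) n (hn : (2 < n)%N) (i j : 'I_n) (r : R) : i != j ->
  normal_closure (@En R n)
    (fun M => exists2 p : {perm 'I_n.+1}, ~~ odd_perm p & M = fm R p) (elem_mx i j r).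
Proof.
move=> ij.
have [k [ki kj]] := @other2 n i j hn.
have jk : j != k by rewrite eq_sym.
have Hs : normal_closure (@En R n)
    (fun M => exists2 p : {perm 'I_n.+1}, ~~ odd_perm p & M = fm R p) (sg R n i j k).
  by apply: nc_base; exists (pp n i j k); [exact: pp_even | ].
have Hy := nc_conj Hs (En_elem r ij) (elem_inv r ij) (elem_inv' r ij).
have Hy2 := nc_mul Hy Hs.
have Hz := nc_conj Hy2 (En_elem 1 jk) (elem_inv 1 jk) (elem_inv' 1 jk).
have sD : sg R n i j k *m (r *: delta_mx i j) = - (r *: delta_mx i j).
  rewrite -scaleN1r; apply/matrixP => a b; rewrite L1 (sg_col _ _ _ _ _ ij ki) !mxE.
  by case: (a == i); case: (b == j); bsimp0.
have Ds : (r *: delta_mx i j) *m sg R n i j k = r *: delta_mx i k.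
  apply/matrixP => a b; rewrite L2 (sg_rowj _ _ _ _ _ ij) !mxE.
  by case: (a == i); case: (b == k); bsimp0.
have D's : (r *: delta_mx i k) *m sg R n i j k = r *: delta_mx i j.
  apply/matrixP => a b; rewrite L2 (sg_rowk _ _ _ _ _ ki) !mxE.
  by case: (a == i); case: (b == j); bsimp0.
have DE : (r *: delta_mx i j) *m ((1 : R) *: delta_mx j k) = r *: delta_mx i k.
  apply/matrixP => a b; rewrite L1 !mxE eqxx andbT.
  by case: (a == i); case: (b == k); bsimp0.
have X1 : elem_mx i j r *m sg R n i j k *m elem_mx i j (- r) *m sg R n i j k =
    1%:M + r *: delta_mx i j + r *: delta_mx i k.
  rewrite /elem_mx scaleNr; apply: conj_alg1 => //; first exact: (sg2 _ _ _ _ _ ij ki).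
  by apply: dd0.
rewrite X1 /elem_mx scaleNr in Hz.
have H2 : (1%:M + (1 : R) *: delta_mx j k) *m (1%:M + r *: delta_mx i j + r *: delta_mx i k)
    *m (1%:M - (1 : R) *: delta_mx j k) = 1%:M + r *: delta_mx i j.
  by apply: conj_alg2 => //; apply: dd0.
by rewrite H2 in Hz.
Qed.

Lemma rowop_entry (R : nzRingType) n (x y : 'I_n) (r : R) (M : 'M[R]_n) u v :
  (elem_mx x y r *m M) u v = M u v + r * ((u == x)%:R * M y v).
Proof. by rewrite /elem_mx mulmxDl mul1mx mxE L2. Qed.

Lemma En_mul (R : nzRingType) n (M N : 'M[R]_n) : En M -> En N -> En (M *m N).
Proof. exact: gen_mul. Qed.

Lemma En_rowop (R : nzRingType) n (x y : 'I_n) (r : R) (M : 'M[R]_n) :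
  x != y -> En M -> En (elem_mx x y r *m M).
Proof. by move=> xy HM; apply: gen_mul => //; apply: gen_base; exists x, y, r. Qed.

Lemma En_rowop_list (R : nzRingType) n (i : 'I_n) (s : seq 'I_n) (M : 'M[R]_n) :
  i \notin s -> En M ->
  En (\matrix_(u, v) (M u v - (u == i)%:R * \sum_(x <- s) M x v)).
Proof.
elim: s => [|x s IH] /= iS HM.
  have -> : \matrix_(u, v) (M u v - (u == i)%:R * \sum_(x <- [::]) M x v) = M.
    by apply/matrixP => u v; rewrite mxE big_nil mulr0 subr0.
  exact: HM.
rewrite in_cons negb_or in iS; case/andP: iS => ix iS.
have -> : \matrix_(u, v) (M u v - (u == i)%:R * \sum_(y <- x :: s) M y v) =
  elem_mx i x (-1) *m \matrix_(u, v) (M u v - (u == i)%:R * \sum_(y <- s) M y v).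
  apply/matrixP => u v; rewrite rowop_entry !mxE big_cons [x == i]eq_sym (negbTE ix) mul0r subr0.
  by rewrite mulN1r mulrDr opprD addrA addrAC.
by apply: En_rowop => //; apply: IH.
Qed.

Definition st {n} (a : 'I_n) : {perm 'I_n.+1} := tperm (wd a) ord_max.

Ltac bsimp := rewrite /= ?mulr0n ?mulr1n ?oppr0 ?mulN1r ?mul0r ?mulr0 ?mulr1 ?mul1r ?oppr0
  ?addr0 ?add0r ?subr0 ?sub0r ?subrr ?opprK.

Definition C3 (R : nzRingType) n (a c : 'I_n) : 'M[R]_n := \matrix_(u, v)
  (if u == c then - (v == a)%:R else if u == a then (v == a)%:R + (v == c)%:R else (u == v)%:R).
Definition C2 (R : nzRingType) n (a c : 'I_n) : 'M[R]_n := \matrix_(u, v)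
  (if u == c then - (v == a)%:R else if u == a then (v == c)%:R else (u == v)%:R).
Definition B1 (R : nzRingType) n (a c : 'I_n) : 'M[R]_n := \matrix_(u, v)
  (if u == c then - ((v == c)%:R + (v == a)%:R) else if u == a then (v == c)%:R else (u == v)%:R).

Lemma C3E (R : nzRingType) n (a c : 'I_n) : a != c -> elem_mx c a (-1) *m elem_mx a c 1 = C3 R n a c.
Proof.
move=> ac; apply/matrixP => u v; rewrite rowop_entry !mxE.
repeat (case: eqP => [?|?]; subst; bsimp; rewrite ?eqxx //= in ac * ).
Qed.

Lemma C2E (R : nzRingType) n (a c : 'I_n) : a != c -> elem_mx a c 1 *m C3 R n a c = C2 R n a c.
Proof.
move=> ac; apply/matrixP => u v; rewrite rowop_entry !mxE.
repeat (case: eqP => [?|?]; subst; bsimp; rewrite ?eqxx //= in ac * ).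
Qed.

Lemma B1E (R : nzRingType) n (a c : 'I_n) : a != c -> elem_mx c a (-1) *m C2 R n a c = B1 R n a c.
Proof.
move=> ac; apply/matrixP => u v; rewrite rowop_entry !mxE.
repeat (case: eqP => [?|?]; subst; bsimp; rewrite ?eqxx //= in ac * ).
Qed.

Lemma En_B1 (R : nzRingType) n (a c : 'I_n) : a != c -> En (B1 R n a c).
Proof.
move=> ac; have ca : c != a by rewrite eq_sym.
rewrite -B1E // -C2E // -C3E //.
apply: En_rowop => //; apply: En_rowop => //; apply: En_rowop => //.
by apply: gen_base; exists a, c, 1.
Qed.

Lemma sum_ind (R : nzRingType) n (P : pred 'I_n) (v : 'I_n) :
  \sum_(x | P x) ((x == v)%:R : R) = (P v)%:R.
Proof.
case Pv: (P v).
  rewrite (bigD1 v) //= eqxx big1 ?addr0 // => x /andP[_ xv].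
  by rewrite (negbTE xv).
rewrite big1 // => x Px; case: eqP => // e; subst.
by rewrite Px in Pv.
Qed.

Lemma fm_sc (R : nzRingType) n (a c : 'I_n) (u v : 'I_n) : a != c ->
  fm R (st a * st c)%g u v =
    if u == c then -1 else if u == a then (v == c)%:R else (u == v)%:R.
Proof.
move=> ac; rewrite !mxE permM /st !permE /= !fun_if !if_arg !wd_eq ?wd_max ?max_wd ?eqxx.
repeat (case: eqP => [?|?]; subst; bsimp; rewrite ?wd_eq ?wd_max ?max_wd ?eqxx //= in ac * ).
Qed.

Lemma En_sc (R : nzRingType) n (a c : 'I_n) : En (fm R (st a * st c)%g).
Proof.
case: (eqVneq a c) => [->|ac]; first by rewrite /st tperm2 fm1; exact: gen_one.
pose s := [seq x <- index_enum 'I_n | (x != c) && (x != a)].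
have -> : fm R (st a * st c)%g = \matrix_(u, v)
    (B1 R n a c u v - (u == c)%:R * \sum_(x <- s) B1 R n a c x v).
  apply/matrixP => u v; rewrite fm_sc // mxE big_filter.
  under eq_bigr => x /andP[xc xa] do rewrite mxE (negbTE xc) (negbTE xa).
  rewrite sum_ind mxE.
  repeat (case: eqP => [?|?]; subst; bsimp; rewrite ?eqxx //= in ac * ).
apply: En_rowop_list; last exact: En_B1.
by rewrite mem_filter eqxx.
Qed.

Arguments En_sc R {n} a c.

Lemma En_inv (R : nzRingType) n (p q : {perm 'I_n.+1}) :
  En (fm R p) -> (p * q = 1)%g -> En (fm R q).
Proof.
move=> Hp pq.
have qp : (q * p = 1)%g.
  by move/eqP: pq; rewrite -eq_invg_mul => /eqP <-; rewrite mulVg.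
apply: (gen_inv Hp); by rewrite -fmM ?pq ?qp fm1.
Qed.

Arguments En_inv {R n p q}.

Lemma st2 n (c : 'I_n) : (st c * st c = 1)%g.
Proof. exact: tperm2. Qed.

Lemma En_cs (R : nzRingType) n (a c : 'I_n) : En (fm R (st c * st a)%g).
Proof.
apply: (En_inv (En_sc R a c)).
by rewrite mulgA -(mulgA (st a)) st2 mulg1 st2.
Qed.

Lemma grp_id (T : finType) (a b d : {perm T}) : (d * d = 1 ->
  a * b * a * d = (a * d) * (d * b) * (a * d))%g.
Proof. by move=> dd; rewrite !mulgA -(mulgA a d d) dd mulg1. Qed.

Lemma En_tc (R : nzRingType) n (c : 'I_n) (x y : 'I_n.+1) :
  x != y -> En (fm R (tperm x y * st c)%g).
Proof.
case: (unliftP ord_max x) => [x'|] ->; case: (unliftP ord_max y) => [y'|] ->;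
  rewrite ?lift_wd ?eqxx // => xy.
- have -> : tperm (wd x') (wd y') = (st x' * st y' * st x')%g.
    have h : (tperm ord_max (wd y') ^ st x')%g = tperm (wd x') (wd y').
      rewrite tpermJ /st tpermR tpermD // ?max_wd //.
    by rewrite -h conjgE /st tpermV [tperm ord_max _]tpermC mulgA.
  rewrite grp_id ?st2 // !fmM.
  by apply: gen_mul; [apply: gen_mul|]; rewrite -fmM; [exact: En_sc|exact: En_cs|exact: En_sc].
- exact: En_sc.
- rewrite tpermC; exact: En_sc.
Qed.

Lemma En_ct (R : nzRingType) n (c : 'I_n) (x y : 'I_n.+1) :
  x != y -> En (fm R (st c * tperm x y)%g).
Proof.
move=> xy; apply: (En_inv (@En_tc R n c x y xy)).
by rewrite mulgA -(mulgA (tperm x y)) st2 mulg1 tperm2.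
Qed.

Lemma En_even (R : nzRingType) n (c : 'I_n) (p : {perm 'I_n.+1}) :
  ~~ odd_perm p -> En (fm R p).
Proof.
have [ts -> Hts] := prod_tpermP p.
suff : En (fm R (let P := (\prod_(t <- ts) tperm t.1 t.2)%g in
                 if odd_perm P then (st c * P)%g else P)).
  by move=> /= H /negbTE E; rewrite E in H.
elim: ts Hts => [|t ts IH] /= Hts.
  by rewrite big_nil odd_perm1 fm1; exact: gen_one.
move/andP: Hts => [dt Hts]; have := IH Hts.
rewrite big_cons odd_permM odd_tperm dt /=.
case: (odd_perm _) => /= H.
- have -> : (tperm t.1 t.2 * \prod_(t <- ts) tperm t.1 t.2 =
     (tperm t.1 t.2 * st c) * (st c * \prod_(t <- ts) tperm t.1 t.2))%g.
    by rewrite -mulgA (mulgA (st c)) st2 mul1g.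
  by rewrite fmM; apply: gen_mul => //; exact: En_tc.
- by rewrite mulgA fmM; apply: gen_mul => //; exact: En_ct.
Qed.

Theorem lemma5p2 (R : nzRingType) (n : nat) (hn : (3 <= n)%N) :
  exists f : {perm 'I_n.+1} -> 'M[R]_n,
    (forall p q : {perm 'I_n.+1}, f (p * q)%g = f p *m f q) /\
    (forall i j : 'I_n.+1, i != j -> f (tperm i j) = sigma_mx R i j) /\
    (forall p q : {perm 'I_n.+1}, ~~ odd_perm p -> ~~ odd_perm q -> f p = f q -> p = q) /\
    (forall p : {perm 'I_n.+1}, ~~ odd_perm p -> En (f p)) /\
    (forall g : 'M[R]_n, En g ->
       normal_closure (@En R n)
         (fun M => exists2 p : {perm 'I_n.+1}, ~~ odd_perm p & M = f p) g).
Proof.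
exists (fm R).
split; first exact: fmM.
split; first exact: fm_tperm.
split.
  move=> p q _ _; apply: fm_inj; lia.
split.
  have h0 : (0 < n)%N by lia.
  move=> p; exact: (@En_even R n (Ordinal h0) p).
move=> g Hg; elim: Hg.
- exact: nc_one.
- move=> x [i [j [r [ij ->]]]]; apply: nc_elem => //; lia.
- move=> x y _ Hx _ Hy; exact: nc_mul.
- move=> x y _ Hx xy yx; exact: (nc_inv Hx xy yx).
Qed.
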